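(* Let $q_1,\dots,q_8$ be the eight points $(\pm1,\pm1,\pm1)$ of $\mathbb{R}^3$, let $t\in(0,1)$ and $q_{j+8}=tq_j$ ($j=1,\dots,8$). Place nonzero mass $\mu_1$ at each vertex $q_1,\dots,q_8$ of the outer cube and nonzero mass $\mu_2$ at each vertex $q_9,\dots,q_{16}$ of the inner cube. There exists $\delta\in(0,1)$ such that: if $t\in(0,\delta)$ and the configuration is central, then $\mu_1$ and $\mu_2$ have the same sign; if $t\in(\delta,1)$ and the configuration is central, then $\mu_1$ and $\mu_2$ have opposite signs.
   Context: A configuration $q=(q_1,\dots,q_N)$ of distinct points in $\mathbb{R}^3$ with masses $m_1,\dots,m_N$ is a central configuration if there exists $c\in\mathbb{R}$ such that $\sum_{j\neq i} m_j\left(\frac{1}{|q_j-q_i|^3}-c\right)(q_j-q_i)=0$ for all $i=1,\dots,N$. *)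

(* Defs.v *)
From Stdlib Require Import Reals List Arith.
Open Scope R_scope.

Definition pt : Type := (R * R * R)%type.
Definition px (p : pt) : R := fst (fst p).
Definition py (p : pt) : R := snd (fst p).
Definition pz (p : pt) : R := snd p.

Definition dist3 (p q : pt) : R :=
  sqrt ((px p - px q) ^ 2 + (py p - py q) ^ 2 + (pz p - pz q) ^ 2).

Definition sum_except (N i : nat) (f : nat -> R) : R :=
  fold_right Rplus 0 (map f (filter (fun j => negb (Nat.eqb j i)) (seq 0 N))).

Definition central_config (N : nat) (q : nat -> pt) (m : nat -> R) : Prop :=
  (forall i j, (i < N)%nat -> (j < N)%nat -> i <> j -> q i <> q j) /\
  exists c : R, forall i, (i < N)%nat ->
    sum_except N i (fun j => m j * (/ (dist3 (q j) (q i)) ^ 3 - c) * (px (q j) - px (q i))) = 0 /\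
    sum_except N i (fun j => m j * (/ (dist3 (q j) (q i)) ^ 3 - c) * (py (q j) - py (q i))) = 0 /\
    sum_except N i (fun j => m j * (/ (dist3 (q j) (q i)) ^ 3 - c) * (pz (q j) - pz (q i))) = 0.

Definition sgnb (b : bool) : R := if b then 1 else -1.

Definition cube_vertex (k : nat) : pt :=
  (sgnb (Nat.testbit k 0), sgnb (Nat.testbit k 1), sgnb (Nat.testbit k 2)).

Definition scale (t : R) (p : pt) : pt := (t * px p, t * py p, t * pz p).

(* Indices 0..7: outer cube q_1..q_8; indices 8..15: inner cube q_{j+8} = t q_j. *)
Definition nested_cubes (t : R) (k : nat) : pt :=
  if (k <? 8)%nat then cube_vertex k else scale t (cube_vertex (k - 8)).

Definition nested_masses (mu1 mu2 : R) (k : nat) : R :=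
  if (k <? 8)%nat then mu1 else mu2.

(* Main.v *)
Require Import Defs.
From Stdlib Require Import Reals Lra Psatz.
From Coquelicot Require Import Coquelicot.
Open Scope R_scope.

Definition S2 := sqrt 2.
Definition S3 := sqrt 3.
Definition Wp t := sqrt (3 + 2*t + 3*t^2).
Definition Wm t := sqrt (3 - 2*t + 3*t^2).

Lemma sqrt_lb x l : 0 <= l -> l*l <= x -> l <= sqrt x.
Proof. intros. rewrite <- (sqrt_square l) by lra. apply sqrt_le_1_alt; lra. Qed.
Lemma sqrt_ub x u : 0 <= u -> x <= u*u -> sqrt x <= u.
Proof. intros. rewrite <- (sqrt_square u) by lra. apply sqrt_le_1_alt; lra. Qed.

Lemma S2_sq : S2 * S2 = 2. Proof. unfold S2; apply sqrt_sqrt; lra. Qed.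
Lemma S3_sq : S3 * S3 = 3. Proof. unfold S3; apply sqrt_sqrt; lra. Qed.
Lemma S2_b : 1.414 <= S2 <= 1.4143.
Proof. unfold S2; split; [apply sqrt_lb|apply sqrt_ub]; lra. Qed.
Lemma S3_b : 1.732 <= S3 <= 1.7321.
Proof. unfold S3; split; [apply sqrt_lb|apply sqrt_ub]; lra. Qed.
Lemma Wp_sq t : Wp t * Wp t = 3 + 2*t + 3*t^2.
Proof. unfold Wp; apply sqrt_sqrt; nra. Qed.
Lemma Wm_sq t : Wm t * Wm t = 3 - 2*t + 3*t^2.
Proof. unfold Wm; apply sqrt_sqrt; nra. Qed.
Lemma Wp_pos t : 0 <= t -> 0 < Wp t.
Proof. intros; unfold Wp; apply sqrt_lt_R0; nra. Qed.
Lemma Wm_pos t : 0 < Wm t.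
Proof. intros; unfold Wm; apply sqrt_lt_R0; nra. Qed.

Lemma inv_le x c : 0 < x -> 1 <= c * x -> / x <= c.
Proof. intros. apply (Rmult_le_reg_l x); [lra|]. rewrite Rinv_r by lra. lra. Qed.
Lemma inv_ge x c : 0 < x -> c * x <= 1 -> c <= / x.
Proof. intros. apply (Rmult_le_reg_l x); [lra|]. rewrite Rinv_r by lra. lra. Qed.

Definition a := / 2 ^ 3 + 2 * (/ (S2 * 2)) ^ 3 + (/ (S3 * 2)) ^ 3.
Definition K := / S3 ^ 3.

Lemma a_b : 0.23743 <= a <= 0.23746.
Proof.
  pose proof S2_b; pose proof S3_b; pose proof S2_sq; pose proof S3_sq.
  assert (E: a = /8 + /(8*S2) + /(24*S3)).
  { unfold a. field_simplify; [|lra|lra]. 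
    replace (S2^3) with (2*S2) by (simpl; nra). replace (S3^3) with (3*S3) by (simpl; nra).
    field; lra. }
  rewrite E.
  assert (/(8*1.4143) <= /(8*S2) <= /(8*1.414)) by (split; apply Rinv_le_contravar; lra).
  assert (/(24*1.7321) <= /(24*S3) <= /(24*1.732)) by (split; apply Rinv_le_contravar; lra).
  assert (0.08838 <= /(8*1.4143)) by (apply inv_ge; lra).
  assert (/(8*1.414) <= 0.088402) by (apply inv_le; lra).
  assert (0.024055 <= /(24*1.7321)) by (apply inv_ge; lra).
  assert (/(24*1.732) <= 0.024058) by (apply inv_le; lra).
  lra.
Qed.
Ltac pos := repeat (apply Rmult_lt_0_compat || apply Rinv_0_lt_compat || apply pow_lt); try lra; try nra.
Ltac nz := repeat split; try (apply Rgt_not_eq; apply Rlt_gt; solve [pos]); try solve [pos].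

Lemma incr_deriv (f f' : R -> R) :
  (forall x, 0 < x < 1 -> is_derive f x (f' x)) -> (forall x, 0 < x < 1 -> 0 < f' x) ->
  forall x y, 0 < x -> x < y -> y < 1 -> f x < f y.
Proof.
  intros Hd Hp x y Hx Hxy Hy.
  destruct (MVT_cor2 f f' x y Hxy) as [c [Hc Hc2]].
  { intros c Hc. apply is_derive_Reals. apply Hd. lra. }
  assert (0 < f' c) by (apply Hp; lra). nra.
Qed.

Definition g1 t := t^3 / (1+t)^2.
Definition g2 t := t^3 / (1-t)^2.
Definition g3 t := t^3 * (3+t) / (Wp t)^3.
Definition g4 t := t^3 * (3-t) / (Wm t)^3.

Lemma g1_incr x y : 0 < x -> x < y -> y < 1 -> g1 x < g1 y.
Proof.
  apply (incr_deriv g1 (fun t => t^2*(3+t)/(1+t)^3)).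
  - intros t Ht. unfold g1. auto_derive. { nz. } field. nz.
  - intros t Ht. apply Rdiv_lt_0_compat; [nra|]. apply pow_lt; lra.
Qed.
Lemma g2_incr x y : 0 < x -> x < y -> y < 1 -> g2 x < g2 y.
Proof.
  apply (incr_deriv g2 (fun t => t^2*(3-t)/(1-t)^3)).
  - intros t Ht. unfold g2. auto_derive. { nz. } field. nz.
  - intros t Ht. apply Rdiv_lt_0_compat; [nra|]. apply pow_lt; lra.
Qed.
Lemma g3_incr x y : 0 < x -> x < y -> y < 1 -> g3 x < g3 y.
Proof.
  apply (incr_deriv g3 (fun t => t^2*((9+4*t)*(Wp t)^2 - 3*t*(3+t)*(1+3*t))/(Wp t)^5)).
  - intros t Ht. unfold g3. unfold Wp. auto_derive.
    { replace (3 + 2 * t + 3 * (t * (t * 1))) with (3 + 2*t+3*t^2) by ring; fold (Wp t).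
      pose proof (Wp_pos t ltac:(lra)). nz. }
    replace (3 + 2 * t + 3 * (t * (t * 1))) with (3 + 2*t+3*t^2) by ring; fold (Wp t).
    pose proof (Wp_pos t ltac:(lra)). field. nz.
  - intros t Ht. pose proof (Wp_pos t ltac:(lra)). pose proof (Wp_sq t). apply Rdiv_lt_0_compat; [|apply pow_lt; lra].
    replace (Wp t ^2) with (Wp t * Wp t) by ring. rewrite H0. nra.
Qed.
Lemma g4_incr x y : 0 < x -> x < y -> y < 1 -> g4 x < g4 y.
Proof.
  apply (incr_deriv g4 (fun t => t^2*((9-4*t)*(Wm t)^2 - 3*t*(3-t)*(3*t-1))/(Wm t)^5)).
  - intros t Ht. unfold g4. unfold Wm. auto_derive.
    { replace (3 + - (2 * t) + 3 * (t * (t * 1))) with (3 - 2*t+3*t^2) by ring; fold (Wm t).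
      pose proof (Wm_pos t). nz. }
    replace (3 + - (2 * t) + 3 * (t * (t * 1))) with (3 - 2*t+3*t^2) by ring; fold (Wm t).
    pose proof (Wm_pos t). field. nz.
  - intros t Ht. pose proof (Wm_pos t). pose proof (Wm_sq t). apply Rdiv_lt_0_compat; [|apply pow_lt; lra].
    replace (Wm t ^2) with (Wm t * Wm t) by ring. rewrite H0. nra.
Qed.
Lemma sqrt_ext x y : x = y -> sqrt x = sqrt y.
Proof. intros ->; reflexivity. Qed.

Lemma sqrt_mul_sq x y : 0 <= x -> 0 <= y -> sqrt (x * y^2) = sqrt x * y.
Proof. intros Hx Hy. rewrite sqrt_mult_alt by lra. rewrite sqrt_pow2 by lra. reflexivity. Qed.

Lemma sq4 : sqrt 4 = 2.
Proof. replace 4 with (1*2^2) by ring. rewrite sqrt_mul_sq, sqrt_1; lra. Qed.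
Lemma sq8 : sqrt 8 = S2 * 2.
Proof. replace 8 with (2*2^2) by ring. rewrite sqrt_mul_sq; unfold S2; lra. Qed.
Lemma sq12 : sqrt 12 = S3 * 2.
Proof. replace 12 with (3*2^2) by ring. rewrite sqrt_mul_sq; unfold S3; lra. Qed.

Ltac canon t := repeat match goal with |- context [sqrt ?X] =>
  first [ rewrite (sqrt_ext X 4) by ring; rewrite sq4
        | rewrite (sqrt_ext X 8) by ring; rewrite sq8
        | rewrite (sqrt_ext X 12) by ring; rewrite sq12
        | rewrite (sqrt_ext X (3 + 2*t + 3*t^2)) by ring; fold (Wp t)
        | rewrite (sqrt_ext X (3 - 2*t + 3*t^2)) by ring; fold (Wm t)
        | rewrite (sqrt_ext X (3 * (1+t)^2)) by ring; rewrite (sqrt_mul_sq 3 (1+t)) by lra; fold S3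
        | rewrite (sqrt_ext X (3 * (1-t)^2)) by ring; rewrite (sqrt_mul_sq 3 (1-t)) by lra; fold S3
        | rewrite (sqrt_ext X (1 * (2*t)^2)) by ring; rewrite (sqrt_mul_sq 1 (2*t)), sqrt_1 by lra
        | rewrite (sqrt_ext X (2 * (2*t)^2)) by ring; rewrite (sqrt_mul_sq 2 (2*t)) by lra; fold S2
        | rewrite (sqrt_ext X (3 * (2*t)^2)) by ring; rewrite (sqrt_mul_sq 3 (2*t)) by lra; fold S3 ] end.

Lemma K_b : 0.19244 <= K <= 0.19246.
Proof.
  pose proof S3_b; pose proof S3_sq.
  assert (E: K = /(3*S3)). { unfold K. replace (S3^3) with (3*S3) by (simpl; nra). reflexivity. }
  rewrite E. split; [apply inv_ge|apply inv_le]; lra.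
Qed.

Definition Xf t := (1+t)*((/(S3*(1+t)))^3 + 2*(/Wp t)^3 + (/Wm t)^3).
Definition Yf t := (1-t)*((/Wp t)^3 + 2*(/Wm t)^3 + (/(S3*(1-t)))^3).
Definition P t := 2*a*t - (Xf t - Yf t).
Definition G t := t^3*(Xf t + Yf t).

Lemma key t mu1 mu2 : 0 < t < 1 ->
  central_config 16 (nested_cubes t) (nested_masses mu1 mu2) ->
  mu1 * P t * t^2 = mu2 * (2*a - G t).
Proof.
  intros Ht [_ [c Hc]].
  destruct (Hc 0%nat ltac:(lia)) as [H0 _]. destruct (Hc 8%nat ltac:(lia)) as [H8 _].
  clear Hc. revert H0 H8. unfold dist3.
  cbn [sum_except List.filter List.seq List.map List.fold_right Nat.eqb negb nested_cubes nested_masses cube_vertex Nat.ltb Nat.leb Nat.testbit Nat.odd Nat.even Nat.div2 Nat.sub sgnb scale px py pz fst snd].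
  canon t. intros H0 H8.
  pose proof S2_b; pose proof S3_b; pose proof (Wp_pos t ltac:(lra)); pose proof (Wm_pos t).
  match goal with H0: ?L0 = 0, H8: ?L8 = 0 |- _ =>
    assert (E: mu1 * P t * t^2 - mu2*(2*a - G t) = t^2*(t*L0 - L8)) end.
  { unfold P, G, Xf, Yf, a. field. nz. }
  rewrite H0, H8 in E. assert (t^2*(t*0-0) = 0) by ring. lra.
Qed.

Lemma P_pos t : 0 < t < 1 -> 0 < P t.
Proof.
  intros Ht.
  pose proof (Wp_pos t ltac:(lra)) as Hw1; pose proof (Wm_pos t) as Hw2;
  pose proof (Wp_sq t) as E1; pose proof (Wm_sq t) as E2.
  pose proof S3_b. pose proof a_b. pose proof K_b.
  assert (HP: P t = t*(2*a + K*(4/((1-t^2)^2)) - 3*(/Wm t^3 + /Wp t^3))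
     + (Wp t - Wm t)*((Wp t^2+Wp t*Wm t+Wm t^2)/(Wp t^3*Wm t^3))).
  { unfold P, Xf, Yf, K. field. nz. }
  rewrite HP.
  set (w1 := Wp t) in *; set (w2 := Wm t) in *.
  assert (8/3 <= w2*w2) by (rewrite E2; pose proof (pow2_ge_0 (t-1/3)); nra).
  assert (Hw2l : 1.632 <= w2) by (destruct (Rlt_or_le w2 1.632); [nra|lra]).
  assert (HA : / w2^3 <= 0.2301).
  { apply inv_le; [pos|]. assert (1.632^3 <= w2^3) by (apply pow_incr; lra). lra. }
  assert (w2*w2 <= w1*w1) by (rewrite E1, E2; nra).
  assert (Hge : w2 <= w1) by (destruct (Rlt_or_le w1 w2); [nra|lra]).
  assert (HD : 0 <= (w1 - w2)*((w1^2+w1*w2+w2^2)/(w1^3*w2^3))).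
  { apply Rmult_le_pos; [lra|]. apply Rlt_le, Rdiv_lt_0_compat; pos. }
  assert (H4 : 4*K <= K*(4/((1-t^2)^2))).
  { assert (0 < 1 - t^2 < 1) by nra.
    assert (1 <= /((1-t^2)^2)) by (apply inv_ge; [apply pow_lt; lra|]; set (u := 1 - t^2) in *; nra).
    unfold Rdiv. nra. }
  destruct (Rle_or_lt (1/3) t) as [Hl|Hl].
  - assert (4 <= w1*w1) by (rewrite E1; nra).
    assert (Hw1l : 2 <= w1) by (destruct (Rlt_or_le w1 2); [nra|lra]).
    assert (HB : / w1^3 <= /8).
    { apply Rinv_le_contravar; [lra|]. replace 8 with (2^3) by ring. apply pow_incr; lra. }
    assert (0 < 2*a + K*(4/((1-t^2)^2)) - 3*(/w2^3 + /w1^3)) by lra.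
    assert (0 < t*(2*a + K*(4/((1-t^2)^2)) - 3*(/w2^3 + /w1^3))) by (apply Rmult_lt_0_compat; lra).
    lra.
  - assert (3 <= w1*w1) by (rewrite E1; nra).
    assert (Hw1l : 1.732 <= w1) by (destruct (Rlt_or_le w1 1.732); [nra|lra]).
    assert (HB : / w1^3 <= 0.1925).
    { apply inv_le; [pos|]. assert (1.732^3 <= w1^3) by (apply pow_incr; lra). lra. }
    assert (w1*w1 <= 4) by (rewrite E1; nra).
    assert (Hw1u : w1 <= 2) by (destruct (Rlt_or_le 2 w1); [nra|lra]).
    assert (w2*w2 <= 4) by (rewrite E2; nra).
    assert (Hw2u : w2 <= 2) by (destruct (Rlt_or_le 2 w2); [nra|lra]).
    assert (Hdiff : t <= w1 - w2).
    { assert ((w1 - w2)*(w1+w2) = 4*t) by nra. nra. }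
    assert (HN : 7.68 <= w1^2+w1*w2+w2^2) by nra.
    assert (HM : w1^3*w2^3 <= 64).
    { assert (w1^3 <= 2^3) by (apply pow_incr; lra). assert (w2^3 <= 2^3) by (apply pow_incr; lra).
      replace 64 with (2^3*2^3) by ring. apply Rmult_le_compat; try lra; apply pow_le; lra. }
    assert (HQ : 0.12 <= (w1^2+w1*w2+w2^2)/(w1^3*w2^3)).
    { unfold Rdiv. assert (/64 <= /(w1^3*w2^3)) by (apply Rinv_le_contravar; [pos|lra]).
      replace 0.12 with (7.68 * /64) by lra. apply Rmult_le_compat; lra. }
    assert (t*0.12 <= (w1 - w2)*((w1^2+w1*w2+w2^2)/(w1^3*w2^3))) by (apply Rmult_le_compat; lra).
    assert (0 < 2*a + K*(4/((1-t^2)^2)) - 3*(/w2^3 + /w1^3) + 0.12) by lra.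
    assert (0 < t*(2*a + K*(4/((1-t^2)^2)) - 3*(/w2^3 + /w1^3) + 0.12)) by (apply Rmult_lt_0_compat; lra).
    lra.
Qed.

Lemma G_eq t : 0 < t < 1 -> G t = K*(g1 t + g2 t) + g3 t + g4 t.
Proof.
  intros Ht. pose proof S3_b; pose proof (Wp_pos t ltac:(lra)); pose proof (Wm_pos t).
  unfold G, Xf, Yf, K, g1, g2, g3, g4. field. nz.
Qed.

Lemma G_incr x y : 0 < x -> x < y -> y < 1 -> G x < G y.
Proof.
  intros. rewrite !G_eq by lra. pose proof K_b.
  pose proof (g1_incr x y); pose proof (g2_incr x y); pose proof (g3_incr x y); pose proof (g4_incr x y).
  nra.
Qed.

Lemma G_half : G (1/2) < 2*a.
Proof.
  rewrite G_eq by lra. pose proof K_b; pose proof a_b.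
  assert (E1: g1 (1/2) = 1/18) by (unfold g1; field).
  assert (E2: g2 (1/2) = 1/2) by (unfold g2; field).
  assert (Hp: 2 <= Wp (1/2)) by (unfold Wp; apply sqrt_lb; lra).
  assert (Hm: 1.6 <= Wm (1/2)) by (unfold Wm; apply sqrt_lb; lra).
  assert (E3: g3 (1/2) = 7/16 * / Wp (1/2) ^3) by (unfold g3; field; nz).
  assert (E4: g4 (1/2) = 5/16 * / Wm (1/2) ^3) by (unfold g4; pose proof (Wm_pos (1/2)); field; nz).
  assert (/ Wp (1/2) ^3 <= /8).
  { apply Rinv_le_contravar; [lra|]. replace 8 with (2^3) by ring. apply pow_incr; lra. }
  assert (/ Wm (1/2) ^3 <= /4.096).
  { apply Rinv_le_contravar; [lra|]. replace 4.096 with (1.6^3) by lra. apply pow_incr; lra. }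
  assert (/4.096 <= 0.2442) by (apply inv_le; lra).
  rewrite E1, E2, E3, E4. nra.
Qed.

Lemma G_34 : 2*a < G (3/4).
Proof.
  rewrite G_eq by lra. pose proof K_b; pose proof a_b.
  assert (E2: g2 (3/4) = 27/4) by (unfold g2; field).
  assert (0 <= g1 (3/4)) by (unfold g1; apply Rlt_le, Rdiv_lt_0_compat; pos).
  assert (0 <= g3 (3/4)) by (unfold g3; pose proof (Wp_pos (3/4) ltac:(lra)); apply Rlt_le, Rdiv_lt_0_compat; pos).
  assert (0 <= g4 (3/4)) by (unfold g4; pose proof (Wm_pos (3/4)); apply Rlt_le, Rdiv_lt_0_compat; pos).
  rewrite E2. nra.
Qed.

Theorem theorem11 :
  exists delta : R, 0 < delta < 1 /\
    forall t mu1 mu2 : R, mu1 <> 0 -> mu2 <> 0 ->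
      ((0 < t < delta ->
          central_config 16 (nested_cubes t) (nested_masses mu1 mu2) ->
          (0 < mu1 /\ 0 < mu2) \/ (mu1 < 0 /\ mu2 < 0)) /\
       (delta < t < 1 ->
          central_config 16 (nested_cubes t) (nested_masses mu1 mu2) ->
          (0 < mu1 /\ mu2 < 0) \/ (mu1 < 0 /\ 0 < mu2))).
Proof.
  set (S := fun t => 0 < t < 1 /\ G t < 2*a).
  assert (Hb : bound S) by (exists 1; intros x [Hx _]; lra).
  assert (Hne : exists x, S x) by (exists (1/2); split; [lra|apply G_half]).
  destruct (completeness S Hb Hne) as [d [Hub Hlub]].
  assert (H34 : forall t, S t -> t < 3/4).
  { intros t [Ht Hg]. destruct (Rlt_or_le t (3/4)) as [|Hle]; auto. exfalso.
    pose proof G_34. destruct (Rle_lt_or_eq_dec _ _ Hle) as [Hlt|Heq].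
    - pose proof (G_incr (3/4) t ltac:(lra) Hlt ltac:(lra)). lra.
    - subst t. lra. }
  assert (Hd1 : 1/2 <= d) by (apply Hub; split; [lra|apply G_half]).
  assert (Hd2 : d <= 3/4) by (apply Hlub; intros x Hx; apply Rlt_le, H34; auto).
  exists d. split; [lra|]. intros t mu1 mu2 Hm1 Hm2. split.
  - intros Ht Hcc. pose proof (key t mu1 mu2 ltac:(lra) Hcc) as E. pose proof (P_pos t ltac:(lra)).
    assert (HG : G t < 2*a).
    { destruct (Rlt_or_le (G t) (2*a)) as [|Hle]; auto. exfalso.
      assert (is_upper_bound S t).
      { intros s [Hs Hsg]. destruct (Rle_or_lt s t) as [|Hlt]; auto.
        pose proof (G_incr t s ltac:(lra) Hlt ltac:(lra)). lra. }
      pose proof (Hlub t H0). lra. }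
    assert (Hp : 0 < P t * t^2) by (apply Rmult_lt_0_compat; [lra|pos]).
    set (p := P t * t^2) in *. set (r := 2*a - G t) in *.
    assert (Hr : 0 < r) by (unfold r; lra).
    assert (E' : mu1 * p = mu2 * r) by (unfold p; rewrite <- E; ring).
    destruct (Rlt_or_le 0 mu1).
    + left. split; [lra|]. destruct (Rlt_or_le 0 mu2); auto. nra.
    + right. split; [lra|]. destruct (Rlt_or_le mu2 0); auto. nra.
  - intros Ht Hcc. pose proof (key t mu1 mu2 ltac:(lra) Hcc) as E. pose proof (P_pos t ltac:(lra)).
    assert (HG : 2*a < G t).
    { destruct (Rlt_or_le (2*a) (G t)) as [|Hle]; auto. exfalso.
      set (t' := (d+t)/2).
      assert (S t').
      { split; [unfold t'; lra|]. pose proof (G_incr t' t ltac:(unfold t'; lra) ltac:(unfold t'; lra) ltac:(lra)). lra. }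
      pose proof (Hub t' H0). unfold t' in *. lra. }
    assert (Hp : 0 < P t * t^2) by (apply Rmult_lt_0_compat; [lra|pos]).
    set (p := P t * t^2) in *. set (r := 2*a - G t) in *.
    assert (Hr : r < 0) by (unfold r; lra).
    assert (E' : mu1 * p = mu2 * r) by (unfold p; rewrite <- E; ring).
    destruct (Rlt_or_le 0 mu1).
    + left. split; [lra|]. destruct (Rlt_or_le mu2 0); auto. nra.
    + right. split; [lra|]. destruct (Rlt_or_le 0 mu2); auto. nra.
Qed.
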